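(* Under the hypotheses of the previous statement (with $P$ analytic in $\{\operatorname{Re}z>0\}$, $a>0$, $|P(z)|<M(\delta)e^{-a|z|}$ on $S(-\tfrac{\pi}{2}+\delta,\tfrac{\pi}{2}-\delta)$ for each $\delta\in(0,\tfrac{\pi}{2})$), let $F$ be the entire function that coincides with $F_\theta(t)=\int_{\arg z=\theta}e^{zt}P(z)\,dz$ on $\Pi_{\theta,a}$ for every $\theta\in(-\tfrac{\pi}{2},\tfrac{\pi}{2})$. Then for every $\delta\in(0,\tfrac{\pi}{2})$, $$|F(t)|\le \frac{2M(\delta)}{a}\quad\text{for all } t\in \overline{\Pi_{\pi/2-\delta,a/2}}\cup\overline{\Pi_{-\pi/2+\delta,a/2}},$$ i.e. outside the open sector with apex $\frac{a}{2\sin\delta}$ on the positive real axis, symmetric about the real axis, with half-opening $\delta$, containing $(\frac{a}{2\sin\delta},+\infty)$. In particular $|F(|t|e^{\pm i\delta})|\le 2M(\delta)/a$ for all $t$. Moreover $F(t)\to0$ as $t\to-\infty$ along the real axis.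
   Context: For $\alpha<\beta$, $S(\alpha,\beta)=\{z\in\mathbb{C}:0<|z|<\infty,\ \alpha<\arg z<\beta\}$. For $\theta\in(-\tfrac{\pi}{2},\tfrac{\pi}{2})$ and $c>0$, $\Pi_{\theta,c}=\{t=\sigma+i\tau:\ \sigma\cos\theta-\tau\sin\theta<c\}$, and $\overline{\Pi_{\theta,c}}$ is its closure. *)

(* Defs.v *)
From Stdlib Require Export Reals.
From Coquelicot Require Export Coquelicot.
Open Scope R_scope.

Definition cexp (z : C) : C :=
  (exp (Re z) * cos (Im z), exp (Re z) * sin (Im z)).

Definition cis (phi : R) : C := (cos phi, sin phi).

Definition holomorphic_on (D : C -> Prop) (f : C -> C) : Prop :=
  forall z : C, D z -> ex_derive (K := C_AbsRing) (V := C_NormedModule) f z.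

Definition entire (f : C -> C) : Prop := holomorphic_on (fun _ => True) f.

Definition right_half_plane (z : C) : Prop := 0 < Re z.

(* S(alpha, beta) = { z : 0 < |z| < oo, alpha < arg z < beta }, written in
   polar form (for -pi < alpha < beta <= pi this is exactly the principal-arg
   condition). *)
Definition sector (alpha beta : R) (z : C) : Prop :=
  exists r phi : R, 0 < r /\ alpha < phi < beta /\ z = (RtoC r * cis phi)%C.

Definition Pi_open (theta c : R) (t : C) : Prop :=
  Re t * cos theta - Im t * sin theta < c.

Definition Pi_closed (theta c : R) (t : C) : Prop :=
  Re t * cos theta - Im t * sin theta <= c.

(* integrand of F_theta(t) = \int_{arg z = theta} e^{zt} P(z) dz,
   parametrized by z = r e^{i theta}, dz = e^{i theta} dr, r in [0,oo) *)
Definition ray_integrand (P : C -> C) (theta : R) (t : C) (r : R) : C :=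
  (cexp (RtoC r * cis theta * t) * P (RtoC r * cis theta) * cis theta)%C.

Definition is_F_theta (P : C -> C) (theta : R) (t l : C) : Prop :=
  is_RInt_gen (ray_integrand P theta t) (at_point 0) (Rbar_locally p_infty) l.

(* Main.v *)
Require Import Defs.
From Stdlib Require Import Reals Lra.
From Coquelicot Require Import Coquelicot.
Open Scope R_scope.

Lemma exp_int (Md k : R) : k < 0 ->
  is_RInt_gen (fun r => Md * exp (k * r)) (at_point 0) (Rbar_locally p_infty) (- (Md / k)).
Proof.
  intros Hk.
  set (G := fun r => Md / k * exp (k * r)).
  assert (HD : forall r, Derive G r = Md * exp (k * r)).
  { intros r. apply is_derive_unique. unfold G. auto_derive; auto. field. lra. }
  replace (- (Md / k)) with (0 - Md/k) by ring.
  apply is_RInt_gen_ext with (Derive G).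
  { exists (fun _ => True) (fun _ => True); [easy | exists 0; easy |].
    intros x y _ _ z _. now rewrite HD. }
  { apply (is_RInt_gen_Derive (Fa := at_point 0) (Fb := Rbar_locally p_infty) G (Md / k) 0).
    - exists (fun _ => True) (fun _ => True); [easy | exists 0; easy |].
      intros x y _ _ z _. unfold G. auto_derive. easy.
    - exists (fun _ => True) (fun _ => True); [easy | exists 0; easy |].
      intros x y _ _ z _. apply continuous_ext with (fun r => Md * exp (k * r)).
      intros; rewrite HD; auto. apply (ex_derive_continuous (K := R_AbsRing) (V := R_NormedModule)). auto_derive. easy.
    - intros Q HQ. unfold filtermap, at_point. unfold G.
      rewrite Rmult_0_r, exp_0, Rmult_1_r. now apply locally_singleton.
    - unfold G. change (is_lim (fun r => Md / k * exp (k * r)) p_infty 0).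
      replace (Finite 0) with (Rbar_mult (Md/k) 0) by (simpl; f_equal; ring).
      apply is_lim_scal_l.
      apply is_lim_comp with m_infty. apply is_lim_exp_m.
      replace m_infty with (Rbar_mult k p_infty).
      apply is_lim_scal_l. apply is_lim_id.
      simpl. case Rle_dec; intro h; [exfalso; lra | reflexivity].
      exists 0. intros; discriminate. }
Qed.

Lemma cmod_cexp z : Cmod (cexp z) = exp (Re z).
Proof.
  unfold cexp, Cmod. simpl fst. simpl snd.
  assert (H : forall e c s, c * c + s * s = 1 -> (e * c) ^ 2 + (e * s) ^ 2 = e ^ 2).
  { intros e c0 s0 Hcs. replace (e ^ 2) with (e ^ 2 * (c0 * c0 + s0 * s0)) by (rewrite Hcs; ring). ring. }
  rewrite H. apply sqrt_pow2. left; apply exp_pos.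
  rewrite Rplus_comm. apply sin2_cos2.
Qed.

Lemma cmod_cis p : Cmod (cis p) = 1.
Proof.
  unfold cis, Cmod. simpl fst. simpl snd. rewrite <- sqrt_1. f_equal.
  rewrite <- (sin2_cos2 p). unfold Rsqr. ring.
Qed.

Lemma normCR (z:C) : @norm R_AbsRing C_R_CompleteNormedModule z = Cmod z.
Proof. unfold norm. simpl. unfold prod_norm, Cmod.
change (@norm R_AbsRing R_NormedModule) with Rabs. rewrite !pow2_abs. reflexivity. Qed.

Lemma core (P : C -> C) (a Md delta theta : R) (t l : C) :
  (forall z : C, sector (- (PI / 2) + delta) (PI / 2 - delta) z ->
        Cmod (P z) < Md * exp (- a * Cmod z)) ->
  - (PI / 2) + delta < theta < PI / 2 - delta ->
  Re t * cos theta - Im t * sin theta < a ->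
  is_F_theta P theta t l ->
  Cmod l <= Md / (a - (Re t * cos theta - Im t * sin theta)).
Proof.
  intros HM Hth Hc HF.
  set (c := Re t * cos theta - Im t * sin theta) in *.
  assert (Hb : forall r, 0 < r -> Cmod (ray_integrand P theta t r) <= Md * exp ((c - a) * r)).
  { intros r Hr. unfold ray_integrand. rewrite !Cmod_mult, cmod_cis, cmod_cexp.
    assert (HRe : Re (RtoC r * cis theta * t) = r * c).
    { unfold c, cis, RtoC; simpl. unfold Re, Im. ring. }
    assert (Hz : Cmod (RtoC r * cis theta) = r).
    { rewrite Cmod_mult, cmod_cis, Cmod_R, Rabs_pos_eq; lra. }
    assert (HP := HM (RtoC r * cis theta)%C).
    rewrite Hz in HP.
    assert (HP' : Cmod (P (RtoC r * cis theta)%C) < Md * exp (- a * r)).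
    { apply HP. exists r, theta. split; [lra | split; [lra | reflexivity]]. }
    rewrite HRe.
    replace ((c - a) * r) with (r * c + - a * r) by ring. rewrite exp_plus.
    assert (0 < exp (r * c)) by apply exp_pos.
    nra. }
  assert (HMd : 0 < Md).
  { assert (H0 := Hb 1 Rlt_0_1). 
    assert (H1 := HM (RtoC 1 * cis theta)%C).
    assert (0 < exp (- a * Cmod (RtoC 1 * cis theta))) by apply exp_pos.
    assert (0 <= Cmod (P (RtoC 1 * cis theta)%C)) by apply Cmod_ge_0.
    assert (Cmod (P (RtoC 1 * cis theta)%C) < Md * exp (- a * Cmod (RtoC 1 * cis theta))).
    { apply H1. exists 1, theta. split; [lra | split; [lra | reflexivity]]. }
    nra. }
  set (f' := fun r => if Rlt_dec 0 r then ray_integrand P theta t r else RtoC 0).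
  assert (Hf' : is_RInt_gen f' (at_point 0) (Rbar_locally p_infty) l).
  { apply is_RInt_gen_ext with (ray_integrand P theta t); [| exact HF].
    exists (fun x => x = 0) (fun y => 0 < y); [reflexivity | exists 0; auto |].
    intros x y Hx Hy z Hz. simpl in Hz. subst x. unfold f'.
    rewrite Rmin_left, Rmax_right in Hz by lra.
    destruct (Rlt_dec 0 z); [reflexivity | lra]. }
  replace (Md / (a - c)) with (- (Md / (c - a))) by (field; lra).
  rewrite <- normCR.
  apply (RInt_gen_norm (V := C_R_CompleteNormedModule) (Fa := at_point 0) (Fb := Rbar_locally p_infty) f' (fun r => Md * exp ((c - a) * r))).
  - exists (fun x => x = 0) (fun y => 0 < y); [reflexivity | exists 0; auto |].
    intros x y Hx Hy. simpl. lra.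
  - exists (fun x => x = 0) (fun y => 0 < y); [reflexivity | exists 0; auto |].
    intros x y Hx Hy z Hz. simpl in Hz. unfold f'.
    rewrite normCR. destruct (Rlt_dec 0 z). apply Hb; auto.
    rewrite Cmod_0.
    assert (0 < exp ((c - a) * z)) by apply exp_pos. nra.
  - exact Hf'.
  - apply exp_int. lra.
Qed.

Lemma ballR x e y : ball x e y -> Rabs (y - x) < e.
Proof. intros H. unfold ball in H. simpl in H. unfold AbsRing_ball, abs, minus, plus, opp in H. simpl in H. exact H. Qed.

Lemma bound_closed (P : C -> C) (a Md delta theta0 sigma eta : R) (t l : C) :
  0 < a ->
  (forall z : C, sector (- (PI / 2) + delta) (PI / 2 - delta) z ->
        Cmod (P z) < Md * exp (- a * Cmod z)) ->
  (forall theta, - (PI / 2) + delta < theta < PI / 2 - delta ->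
      Re t * cos theta - Im t * sin theta < a -> is_F_theta P theta t l) ->
  0 < eta -> Rabs sigma = 1 ->
  (forall h, 0 < h < eta -> - (PI / 2) + delta < theta0 - sigma * h < PI / 2 - delta) ->
  Re t * cos theta0 - Im t * sin theta0 <= a / 2 ->
  Cmod l <= 2 * Md / a.
Proof.
  intros Ha HM Hall Heta Hsig Hin Hc0.
  set (cf := fun th => Re t * cos th - Im t * sin th).
  change (cf theta0 <= a / 2) in Hc0.
  assert (Hl0 := Cmod_ge_0 l).
  destruct (Rle_dec (Cmod l * (a - cf theta0)) Md) as [Hle | Hgt].
  - assert (E : 2 * Md / a * (a / 2) = Md) by (field; lra).
    apply Rmult_le_reg_r with (a / 2); [lra |]. rewrite E. nra.
  - exfalso. apply Rnot_le_lt in Hgt.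
    set (gap := Cmod l * (a - cf theta0) - Md).
    assert (Hgap : 0 < gap) by (unfold gap; lra).
    set (q := gap / (Cmod l + 1)).
    assert (Hq : q * (Cmod l + 1) = gap) by (unfold q; field; lra).
    assert (Hq0 : 0 < q) by (unfold q; apply Rdiv_lt_0_compat; lra).
    set (eps := Rmin (a / 2) q).
    assert (He0 : 0 < eps) by (unfold eps; apply Rmin_pos; lra).
    assert (He1 : eps <= a / 2) by apply Rmin_l.
    assert (He2 : eps <= q) by apply Rmin_r.
    assert (Hcont : continuous cf theta0).
    { apply (ex_derive_continuous (K := R_AbsRing) (V := R_NormedModule)).
      unfold cf. auto_derive. easy. }
    destruct (Hcont _ (locally_ball (cf theta0) (mkposreal eps He0))) as [d Hd].
    set (h := Rmin d eta / 2).
    assert (Hh0 : 0 < h) by (unfold h; assert (0 < Rmin d eta) by (apply Rmin_pos; [apply cond_pos | lra]); lra).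
    assert (Hh1 : h < d) by (unfold h; assert (Rmin d eta <= d) by apply Rmin_l; assert (0 < d) by apply cond_pos; lra).
    assert (Hh2 : h < eta) by (unfold h; assert (Rmin d eta <= eta) by apply Rmin_r; lra).
    set (th := theta0 - sigma * h).
    assert (Hball : Rabs (cf th - cf theta0) < eps).
    { apply ballR. apply (Hd th).
      unfold ball; simpl; unfold AbsRing_ball, abs, minus, plus, opp; simpl.
      unfold th. replace (theta0 - sigma * h + - theta0) with (- (sigma * h)) by ring.
      rewrite Rabs_Ropp, Rabs_mult, Hsig, Rabs_pos_eq; lra. }
    apply Rabs_def2 in Hball. destruct Hball as [Hb1 Hb2].
    assert (Hth := Hin h (conj Hh0 Hh2)). fold th in Hth.
    assert (Hca : cf th < a) by lra.
    assert (Hk := core P a Md delta th t l HM Hth Hca (Hall th Hth Hca)).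
    fold (cf th) in Hk.
    assert (Hk' : Cmod l * (a - cf th) <= Md).
    { apply Rmult_le_reg_r with (/ (a - cf th)). apply Rinv_0_lt_compat; lra.
      rewrite Rmult_assoc, Rinv_r by lra. rewrite Rmult_1_r. exact Hk. }
    assert (Cmod l * eps <= Cmod l * q) by nra.
    assert (0 <= Cmod l * (cf theta0 + eps - cf th)) by (apply Rmult_le_pos; lra).
    unfold gap in Hq. nra.
Qed.

Theorem mainTheorem6 (P : C -> C) (a : R) (M : R -> R) (F : C -> C)
  (HP : holomorphic_on right_half_plane P)
  (Ha : 0 < a)
  (HM : forall delta : R, 0 < delta < PI / 2 ->
        forall z : C, sector (- (PI / 2) + delta) (PI / 2 - delta) z ->
        Cmod (P z) < M delta * exp (- a * Cmod z))
  (HF : entire F)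
  (HFtheta : forall theta : R, - (PI / 2) < theta < PI / 2 ->
        forall t : C, Pi_open theta a t -> is_F_theta P theta t (F t)) :
  (forall delta : R, 0 < delta < PI / 2 ->
     (forall t : C,
        Pi_closed (PI / 2 - delta) (a / 2) t \/
        Pi_closed (- (PI / 2) + delta) (a / 2) t ->
        Cmod (F t) <= 2 * M delta / a) /\
     (forall s : R,
        Cmod (F (RtoC (Rabs s) * cis delta)%C) <= 2 * M delta / a /\
        Cmod (F (RtoC (Rabs s) * cis (- delta))%C) <= 2 * M delta / a)) /\
  filterlim (fun x : R => F (RtoC x)) (Rbar_locally m_infty) (locally (RtoC 0)).
Proof.
  assert (Part1 : forall delta : R, 0 < delta < PI / 2 ->
     forall t : C,
        Pi_closed (PI / 2 - delta) (a / 2) t \/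
        Pi_closed (- (PI / 2) + delta) (a / 2) t ->
        Cmod (F t) <= 2 * M delta / a).
  { intros delta Hd t Ht.
    assert (Hall : forall theta, - (PI / 2) + delta < theta < PI / 2 - delta ->
      Re t * cos theta - Im t * sin theta < a -> is_F_theta P theta t (F t)).
    { intros th Hth Hc. apply HFtheta. lra. exact Hc. }
    destruct Ht as [Ht | Ht].
    - apply (bound_closed P a (M delta) delta (PI / 2 - delta) 1 (PI - 2 * delta) t (F t) Ha
        (HM delta Hd) Hall); try lra.
      + rewrite Rabs_R1; reflexivity.
      + intros h Hh. lra.
      + exact Ht.
    - apply (bound_closed P a (M delta) delta (- (PI / 2) + delta) (-1) (PI - 2 * delta) t (F t) Ha
        (HM delta Hd) Hall); try lra.
      + rewrite Rabs_left by lra; ring.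
      + intros h Hh. lra.
      + exact Ht. }
  split.
  - intros delta Hd. split. apply Part1; auto.
    intros s. split; apply Part1; auto.
    + left. unfold Pi_closed. rewrite cos_shift, sin_shift.
      unfold cis, RtoC, Re, Im; simpl.
      assert (0 <= Rabs s) by apply Rabs_pos.
      replace ((Rabs s * cos delta - 0 * sin delta) * sin delta -
        (Rabs s * sin delta + 0 * cos delta) * cos delta) with 0 by ring. lra.
    + right. unfold Pi_closed.
      replace (- (PI / 2) + delta) with (- (PI / 2 - delta)) by ring.
      rewrite cos_neg, sin_neg, cos_shift, sin_shift.
      unfold cis, RtoC, Re, Im; simpl. rewrite cos_neg, sin_neg.
      replace ((Rabs s * cos delta - 0 * - sin delta) * sin delta -
        (Rabs s * - sin delta + 0 * cos delta) * - cos delta) with 0 by ring. lra.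
  - assert (Hd : 0 < PI / 4 < PI / 2) by (assert (H := PI_RGT_0); lra).
    set (Md := M (PI / 4)).
    assert (HMd : 0 < Md).
    { assert (H1 := HM _ Hd (RtoC 1 * cis 0)%C).
      assert (0 < exp (- a * Cmod (RtoC 1 * cis 0))) by apply exp_pos.
      assert (0 <= Cmod (P (RtoC 1 * cis 0)%C)) by apply Cmod_ge_0.
      assert (Cmod (P (RtoC 1 * cis 0)%C) < Md * exp (- a * Cmod (RtoC 1 * cis 0))).
      { apply H1. exists 1, 0. split; [lra | split; [lra | reflexivity]]. }
      nra. }
    assert (Hb : forall x, x < 0 -> Cmod (F (RtoC x)) <= Md / (a - x)).
    { intros x Hx.
      assert (Hc : Re (RtoC x) * cos 0 - Im (RtoC x) * sin 0 = x).
      { rewrite cos_0, sin_0. unfold RtoC, Re, Im; simpl. ring. }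
      assert (Hth : - (PI / 2) + PI / 4 < 0 < PI / 2 - PI / 4) by lra.
      assert (Hca : Re (RtoC x) * cos 0 - Im (RtoC x) * sin 0 < a) by lra.
      assert (H := core P a Md (PI / 4) 0 (RtoC x) (F (RtoC x)) (HM _ Hd) Hth Hca).
      rewrite Hc in H. apply H. apply HFtheta. lra. unfold Pi_open. exact Hca. }
    apply filterlim_locally. intros eps.
    assert (He := cond_pos eps).
    exists (Rmin 0 (a - Md / eps)). intros x Hx.
    assert (Hx0 : x < 0) by (assert (Rmin 0 (a - Md / eps) <= 0) by apply Rmin_l; lra).
    assert (Hx1 : x < a - Md / eps) by (assert (Rmin 0 (a - Md / eps) <= a - Md / eps) by apply Rmin_r; lra).
    apply (norm_compat1 (V := C_NormedModule)). change (Cmod (F (RtoC x) - RtoC 0)%C < eps). replace (F (RtoC x) - RtoC 0)%C with (F (RtoC x)) by (destruct (F (RtoC x)); unfold Cminus, Cplus, Copp, RtoC; simpl; f_equal; ring).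
    eapply Rle_lt_trans. apply Hb; exact Hx0.
    apply Rmult_lt_reg_r with (a - x); [lra |].
    unfold Rdiv. rewrite Rmult_assoc, Rinv_l, Rmult_1_r by lra.
    assert (E : Md = Md / eps * eps) by (field; lra).
    rewrite E at 1. assert (0 < Md / eps) by (apply Rdiv_lt_0_compat; lra). nra.
Qed.
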